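(* Let $\alpha\ge1$ and $b\in(0,1]$. Let $\nu,\mu$ be the Gibbs distributions of two Ising models $(G,J^\nu,h^\nu)$ and $(G,J^\mu,h^\mu)$ that are both $b$-marginally bounded. Then $$D_{\chi^\alpha}(\nu\|\mu)\ \ge\ \frac{b^{2\alpha}}{2}\, d_{\mathrm{par}}(\nu,\mu)^\alpha .$$
   Context: An Ising model $(G,J,h)$ on $G=(V,E)$ consists of a symmetric $J\in\mathbb{R}^{V\times V}$ with $J_{uv}\ne0$ only if $\{u,v\}\in E$, and $h\in\mathbb{R}^V$; its Gibbs distribution on $\{-1,+1\}^V$ is $\mu(\sigma)\propto\exp(\tfrac12\sigma^TJ\sigma+h^T\sigma)$. The $\chi^\alpha$-divergence is $D_{\chi^\alpha}(\nu\|\mu)=\sum_\sigma\mu(\sigma)\cdot\frac12\left|\frac{\nu(\sigma)}{\mu(\sigma)}-1\right|^\alpha$. The parameter distance is $d_{\mathrm{par}}(\nu,\mu)=\max\left\{\max_{u,v}|J^\nu_{uv}-J^\mu_{uv}|,\ \max_{v\in V}\frac{|h^\nu(v)-h^\mu(v)|}{\deg(v)+1}\right\}$, with $\deg(v)$ the degree of $v$ in $G$. $\mu$ is $b$-marginally bounded if for every $\Lambda\subseteq V$, pinning $\sigma\in\{-1,+1\}^\Lambda$, $v\notin\Lambda$, $c\in\{-1,+1\}$, the conditional marginal probability that $v$ takes value $c$ given $\sigma$ on $\Lambda$ is at least $b$. *)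

(* Defs.v *)
From HB Require Import structures.
From mathcomp Require Import all_boot all_order all_algebra.
From mathcomp Require Import all_classical all_reals all_analysis.
Set Implicit Arguments. Unset Strict Implicit. Unset Printing Implicit Defensive.
Import Order.TTheory GRing.Theory Num.Theory.
Local Open Scope ring_scope.

Section Ising.
Variables (R : realType) (V : finType).

Definition config := {ffun V -> bool}.
Definition spin (b : bool) : R := if b then 1 else -1.

Definition simple_graph (E : rel V) : Prop :=
  (forall u v, E u v = E v u) /\ (forall v, ~~ E v v).

Definition deg (E : rel V) (v : V) : nat := #|[set u | E v u]|.

Definition ising_model (E : rel V) (J : V -> V -> R) (h : V -> R) : Prop :=
  (forall u v, J u v = J v u) /\ (forall u v, J u v != 0 -> E u v).

Definition gibbs_weight (J : V -> V -> R) (h : V -> R) (s : config) : R :=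
  expR (2^-1 * (\sum_u \sum_v J u v * spin (s u) * spin (s v))
        + \sum_v h v * spin (s v)).

Definition partition_fn (J : V -> V -> R) (h : V -> R) : R :=
  \sum_(s : config) gibbs_weight J h s.

Definition gibbs (J : V -> V -> R) (h : V -> R) (s : config) : R :=
  gibbs_weight J h s / partition_fn J h.

Definition marginally_bounded (b : R) (mu : config -> R) : Prop :=
  forall (Lam : {set V}) (tau : config) (v : V) (c : bool), v \notin Lam ->
    b <= (\sum_(s : config | [forall u in Lam, s u == tau u] && (s v == c)) mu s)
         / (\sum_(s : config | [forall u in Lam, s u == tau u]) mu s).

Definition chi_div (alpha : R) (nu mu : config -> R) : R :=
  \sum_(s : config) mu s * (2^-1 * powR `|nu s / mu s - 1| alpha).

Definition d_par (E : rel V) (Jn : V -> V -> R) (hn : V -> R)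
    (Jm : V -> V -> R) (hm : V -> R) : R :=
  Num.max (\big[Num.max/0]_(u : V) \big[Num.max/0]_(v : V) `|Jn u v - Jm u v|)
          (\big[Num.max/0]_(v : V) (`|hn v - hm v| / ((deg E v).+1)%:R)).

End Ising.

(* Main.v *)
Require Import Defs.
From HB Require Import structures.
From mathcomp Require Import all_boot all_order all_algebra.
From mathcomp Require Import all_classical all_reals all_analysis.
From mathcomp Require Import ring lra.
Import Order.TTheory GRing.Theory Num.Theory.
Local Open Scope ring_scope.
Section RealPart.
Variable R : realType.

Lemma ln_le_sub1 (t : R) : 0 < t -> ln t <= t - 1.
Proof.
move=> t0; have := expR_ge1Dx (ln t); rewrite lnK ?posrE // => H.
by rewrite lerBrDl.
Qed.

Lemma ln_lip (b y z : R) : 0 < b -> b <= y -> b <= z ->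
  `|ln y - ln z| <= `|y - z| / b.
Proof.
move=> b0.
wlog zy : y z / z <= y.
  move=> W hy hz; case/orP: (le_total z y) => h; first exact: (W y z h hy hz).
  by rewrite distrC (distrC y); apply: (W z y).
move=> hy hz.
have z0 : 0 < z by apply: lt_le_trans hz.
have y0 : 0 < y by apply: lt_le_trans hy.
rewrite -ln_div ?posrE //.
have h1 : 1 <= y / z by rewrite ler_pdivlMr // mul1r.
have lg : 0 <= ln (y / z) by apply: ln_ge0.
rewrite ger0_norm // ger0_norm ?subr_ge0 //.

have yz0 : 0 < y / z by apply: divr_gt0.
have L := @ln_le_sub1 _ yz0.
apply: (le_trans L).
have -> : y / z - 1 = (y - z) / z by rewrite mulrBl divff ?gt_eqF.
apply: ler_wpM2l; first by rewrite subr_ge0.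
by rewrite lef_pV2 ?posrE.
Qed.

Lemma step5 (alpha m M t D : R) : 1 <= alpha -> 0 < m -> 0 <= M -> 0 <= D ->
  M * D <= m * t -> D <= t -> M * powR D alpha <= m * powR t alpha.
Proof.
move=> a1 m0 M0 D0 h1 h2.
have a0 : 0 < alpha by apply: lt_le_trans a1.
have t0 : 0 <= t by apply: le_trans h2.
rewrite -(mulr_powRB1 D0 a0) -(mulr_powRB1 t0 a0) !mulrA.
apply: ler_pM => //.
- exact: mulr_ge0.
- exact: powR_ge0.
- apply: ge0_ler_powR; rewrite ?subr_ge0 // ?nnegrE //.
Qed.

Lemma mul_norm_div1 (m n : R) : 0 < m -> m * `|n / m - 1| = `|n - m|.
Proof.
move=> m0; have -> : n - m = m * (n / m - 1) by field; rewrite gt_eqF.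
by rewrite normrM (ger0_norm (ltW m0)).
Qed.

Lemma pair_one (alpha m M n D : R) : 1 <= alpha -> 0 < m -> m <= M -> 0 <= D ->
  D <= `|n - m| / M ->
  M * powR D alpha / 2 <= m * (2^-1 * powR `|n / m - 1| alpha).
Proof.
move=> a1 m0 mM D0 hD.
have M0 : 0 < M by apply: lt_le_trans mM.
rewrite mulrCA mulrC; apply: ler_wpM2l; first by rewrite invr_ge0 ler0n.
apply: step5 => //; first exact: ltW.
- by rewrite mul_norm_div1 // mulrC -ler_pdivlMr.
- apply: (le_trans hD); rewrite -(mul_norm_div1 m n m0) mulrC.
  by rewrite mulrA ler_piMl // mulrC ler_pdivrMr // mul1r.
Qed.

Lemma pair_real (alpha b a c n0 n1 m0 m1 : R) :
 1 <= alpha -> 0 < b -> 0 < n0 -> 0 < n1 -> 0 < m0 -> 0 < m1 ->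
 n1 = n0 * expR (2*a) -> m1 = m0 * expR (2*c) ->
 b*(n0+n1) <= n0 -> b*(n0+n1) <= n1 -> b*(m0+m1) <= m0 -> b*(m0+m1) <= m1 ->
 (m0+m1) * powR (b * `|a - c|) alpha / 2 <=
   m1 * (2^-1 * powR `|n1/m1 - 1| alpha) + m0 * (2^-1 * powR `|n0/m0 - 1| alpha).
Proof.
move=> a1 b0 n00 n10 m00 m10 hn hm bn0 bn1 bm0 bm1.
set N := n0 + n1; set M := m0 + m1.
have N0 : 0 < N by rewrite addr_gt0.
have M0 : 0 < M by rewrite addr_gt0.
set p := n1 / N; set p0 := n0 / N; set q := m1 / M; set q0 := m0 / M.
have bp : b <= p by rewrite ler_pdivlMr.
have bp0 : b <= p0 by rewrite ler_pdivlMr.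
have bq : b <= q by rewrite ler_pdivlMr.
have bq0 : b <= q0 by rewrite ler_pdivlMr.
have hp0 : p0 = 1 - p by rewrite /p0 /p /N; field; rewrite gt_eqF.
have hq0 : q0 = 1 - q by rewrite /q0 /q /M; field; rewrite gt_eqF.
have e1 : 2 * a = ln p - ln p0.
  rewrite -ln_div ?posrE ?divr_gt0 //.
  have -> : p / p0 = n1 / n0 by rewrite /p /p0; field; rewrite !gt_eqF.
  by rewrite hn mulrAC divff ?gt_eqF // mul1r expRK.
have e2 : 2 * c = ln q - ln q0.
  rewrite -ln_div ?posrE ?divr_gt0 //.
  have -> : q / q0 = m1 / m0 by rewrite /q /q0; field; rewrite !gt_eqF.
  by rewrite hm mulrAC divff ?gt_eqF // mul1r expRK.
have l1 := ln_lip _ _ _ b0 bp bq.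
have l2 := ln_lip _ _ _ b0 bp0 bq0.
have key : b * `|a - c| <= `|p - q|.
  have h2 : 2 * (a - c) = (ln p - ln q) - (ln p0 - ln q0) by rewrite mulrBr e1 e2; lra.
  have h3 : `|p0 - q0| = `|p - q| by rewrite hp0 hq0 distrC; congr `|_|; lra.
  have h4 : 2 * `|a - c| <= `|p - q| / b + `|p - q| / b.
    rewrite -[2]ger0_norm // -normrM h2; apply: (le_trans (ler_normB _ _)).
    by rewrite h3 in l2; apply: lerD.
  rewrite mulrC -ler_pdivlMr //; move: h4; set t := `|p - q| / b; move=> h4; lra.
have id : q - p = p * (n0 - m0) / M - p0 * (n1 - m1) / M.
  by rewrite /q /p /p0 /N /M; field; rewrite !gt_eqF.
have Dge0 : 0 <= b * `|a - c| by rewrite mulr_ge0 ?(ltW b0).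
have pge0 : 0 <= p by apply: le_trans bp; apply: ltW.
have p0ge0 : 0 <= p0 by apply: le_trans bp0; apply: ltW.
have T0 : 0 <= m0 * (2^-1 * powR `|n0/m0 - 1| alpha).
  by rewrite !mulr_ge0 ?powR_ge0 ?invr_ge0 ?ler0n ?ltW.
have T1 : 0 <= m1 * (2^-1 * powR `|n1/m1 - 1| alpha).
  by rewrite !mulr_ge0 ?powR_ge0 ?invr_ge0 ?ler0n ?ltW.
have bnd : `|p - q| <= p * `|n0 - m0| / M + p0 * `|n1 - m1| / M.
  rewrite distrC id; apply: (le_trans (ler_normB _ _)).
  have Mi : 0 <= M^-1 by rewrite invr_ge0 ltW.
  have nm : forall x y, 0 <= x -> `|x * y / M| = x * `|y| / M.
    by move=> x y x0; rewrite normrM normrM (ger0_norm x0) (ger0_norm Mi).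
  by rewrite !nm.
case/orP: (le_total `|n0 - m0| `|n1 - m1|) => hc.
- have : b * `|a - c| <= `|n1 - m1| / M.
    apply: (le_trans key); apply: (le_trans bnd).
    have : p * `|n0 - m0| <= p * `|n1 - m1| by apply: ler_wpM2l.
    have -> : `|n1 - m1| / M = p * `|n1 - m1| / M + p0 * `|n1 - m1| / M.
      by rewrite hp0; field; rewrite gt_eqF.
    move=> h; rewrite lerD2r ler_wpM2r // invr_ge0 ltW //.
  move=> hD.
  have := pair_one _ _ _ _ _ a1 m10 _ Dge0 hD.
  have mM : m1 <= M by rewrite /M lerDr ltW.
  move/(_ mM) => H; lra.
- have : b * `|a - c| <= `|n0 - m0| / M.
    apply: (le_trans key); apply: (le_trans bnd).
    have : p0 * `|n1 - m1| <= p0 * `|n0 - m0| by apply: ler_wpM2l.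
    have -> : `|n0 - m0| / M = p * `|n0 - m0| / M + p0 * `|n0 - m0| / M.
      by rewrite hp0; field; rewrite gt_eqF.
    move=> h; rewrite lerD2l ler_wpM2r // invr_ge0 ltW //.
  move=> hD.
  have := pair_one _ _ _ _ _ a1 m00 _ Dge0 hD.
  have mM : m0 <= M by rewrite /M lerDl ltW.
  move/(_ mM) => H; lra.
Qed.
End RealPart.
Section Comb.
Variables (R : realType) (V : finType).
Local Notation cfg := (config V).
Local Notation sp := (spin R).

Definition upd (s : cfg) (v : V) (c : bool) : cfg := [ffun w => if w == v then c else s w].
Definition flip (s : cfg) (v : V) : cfg := upd s v (~~ s v).
Definition Lv (J : V -> V -> R) (h : V -> R) (v : V) (s : cfg) : R :=
  h v + \sum_w J v w * sp (s w).

Lemma flipK v : involutive (flip ^~ v).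
Proof.
move=> s; apply/ffunP => w; rewrite !ffunE; case: eqP => [->|//].
by rewrite eqxx negbK.
Qed.

Lemma flip_inj v : injective (flip ^~ v).
Proof. exact: (can_inj (flipK v)). Qed.

Lemma flip_at s v : flip s v v = ~~ s v.
Proof. by rewrite ffunE eqxx. Qed.

Lemma flip_off s v w : w != v -> flip s v w = s w.
Proof. by rewrite ffunE => /negbTE ->. Qed.

Lemma flipC s u v : flip (flip s u) v = flip (flip s v) u.
Proof.
case: (eqVneq u v) => [->//|uv].
have vu : (v == u) = false by rewrite eq_sym (negbTE uv).
apply/ffunP => w; rewrite !ffunE vu (negbTE uv).
case: (eqVneq w v) => [wv|wv]; case: (eqVneq w u) => [wu|wu] //.
by move: uv; rewrite -wu wv eqxx.
Qed.

Lemma pair_sum (F : cfg -> R) v :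
  \sum_s F s = \sum_(s : cfg | s v) (F s + F (flip s v)).
Proof.
rewrite (bigID (fun s : cfg => s v)) /= big_split /=; congr (_ + _).
rewrite (reindex_inj (flip_inj v)) /=.
by apply: eq_bigl => s; rewrite flip_at negbK.
Qed.


Lemma quad_diff (J : V -> V -> R) (a b : V -> R) v :
  (forall u w, J u w = J w u) -> J v v = 0 ->
  (forall w, w != v -> a w = b w) -> a v = 1 -> b v = -1 ->
  \sum_u \sum_w J u w * a u * a w =
    \sum_u \sum_w J u w * b u * b w + 4 * \sum_w J v w * a w.
Proof.
move=> Js Jvv hab ha hb.
have E1 : forall w, J v w * a v * a w - J v w * b v * b w = 2 * (J v w * a w).
  move=> w; rewrite ha hb; case: (eqVneq w v) => [->|wv]; first by rewrite Jvv; ring.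
  rewrite (hab w wv); ring.
have E2 : forall u, u != v ->
    \sum_w (J u w * a u * a w - J u w * b u * b w) = 2 * (J v u * a u).
  move=> u uv; rewrite (bigD1 v) //= big1 ?addr0.
  - by rewrite (hab u uv) ha hb (Js u v); ring.
  - by move=> w wv; rewrite (hab u uv) (hab w wv) subrr.
have E3 : \sum_(u | u != v) 2 * (J v u * a u) = \sum_u 2 * (J v u * a u).
  by rewrite [RHS](bigD1 v) //= Jvv mul0r mulr0 add0r.
have : \sum_u \sum_w J u w * a u * a w - \sum_u \sum_w J u w * b u * b w =
       4 * \sum_w J v w * a w.
  rewrite -sumrB; under eq_bigr => u _ do rewrite -sumrB.
  rewrite (bigD1 v) //=; under eq_bigr => w _ do rewrite E1.
  rewrite (eq_bigr (fun u => 2 * (J v u * a u)) E2) E3 -!mulr_sumr.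
  ring.
move=> H; rewrite -H; ring.
Qed.

Lemma weight_flip (J : V -> V -> R) h v (s : cfg) :
  (forall u w, J u w = J w u) -> J v v = 0 -> s v ->
  gibbs_weight J h s = gibbs_weight J h (flip s v) * expR (2 * Lv J h v s).
Proof.
move=> Js Jvv sv.
have hab : forall w, w != v -> sp (s w) = sp (flip s v w) by move=> w wv; rewrite flip_off.
have ha : sp (s v) = 1 by rewrite sv.
have hb : sp (flip s v v) = -1 by rewrite flip_at sv.
have Q := quad_diff J (fun w => sp (s w)) (fun w => sp (flip s v w)) v Js Jvv hab ha hb.
have Lin : \sum_w h w * sp (s w) = \sum_w h w * sp (flip s v w) + 2 * h v.
  rewrite (bigD1 v) //= [in RHS](bigD1 v) //= ha hb.
  rewrite (eq_bigr (fun w => h w * sp (flip s v w))); last by move=> w wv; rewrite hab.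
  ring.
rewrite /gibbs_weight -expRD; congr expR.
rewrite /= in Q; rewrite Q Lin /Lv; by field.
Qed.

Lemma gibbs_flip (J : V -> V -> R) h v (s : cfg) :
  (forall u w, J u w = J w u) -> J v v = 0 -> s v ->
  gibbs J h s = gibbs J h (flip s v) * expR (2 * Lv J h v s).
Proof. by move=> Js Jvv sv; rewrite /gibbs (weight_flip J h v s Js Jvv sv) mulrAC. Qed.


Lemma part_gt0 (J : V -> V -> R) h : 0 < partition_fn J h.
Proof.
rewrite /partition_fn (bigD1 [ffun=> true]) //=.
have h1 : 0 < gibbs_weight J h [ffun=> true] by apply: expR_gt0.
have h2 : 0 <= \sum_(i | i != [ffun=> true]) gibbs_weight J h i.
  by apply: sumr_ge0 => i _; apply/ltW/expR_gt0.
lra.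
Qed.

Lemma gibbs_gt0 (J : V -> V -> R) h s : 0 < gibbs J h s.
Proof. by rewrite /gibbs divr_gt0 ?expR_gt0 ?part_gt0. Qed.

Lemma gibbs_sum1 (J : V -> V -> R) h : \sum_s gibbs J h s = 1.
Proof.
by rewrite /gibbs -mulr_suml -/(partition_fn J h) divff // gt_eqF ?part_gt0.
Qed.

Lemma pin_pred (tau : cfg) v c :
  [pred s' : cfg | [forall u in [set~ v], s' u == tau u] && (s' v == c)]
    =1 pred1 (upd tau v c).
Proof.
move=> s' /=; apply/andP/eqP.
- case=> /forallP H1 /eqP H2; apply/ffunP => w; rewrite ffunE.
  case: eqP => [->//|/eqP wv].
  by have := H1 w; rewrite !inE wv /= => /eqP.
- move=> ->; split; last by rewrite ffunE eqxx.
  by apply/forallP => u; apply/implyP; rewrite !inE ffunE => /negbTE ->.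
Qed.

Lemma marg_upd b (mu : cfg -> R) (tau : cfg) v c :
  (forall s, 0 < mu s) -> marginally_bounded b mu ->
  b * (mu (upd tau v true) + mu (upd tau v false)) <= mu (upd tau v c).
Proof.
move=> mu0 MB.
have vn : v \notin [set~ v] by rewrite !inE eqxx.
have := MB [set~ v] tau v c vn.
rewrite (big_pred1 (upd tau v c)); last exact: pin_pred.
rewrite (bigID (fun s : cfg => s v)) /=.
rewrite (big_pred1 (upd tau v true)); last first.
  by move=> s'; rewrite -(pin_pred tau v true s') /= eqb_id.
rewrite (big_pred1 (upd tau v false)); last first.
  by move=> s'; rewrite -(pin_pred tau v false s') /= eqbF_neg.
by rewrite ler_pdivlMr ?addr_gt0 // mulrC.
Qed.

Lemma upd_true (s : cfg) v : s v -> upd s v true = s.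
Proof. by move=> sv; apply/ffunP => w; rewrite ffunE; case: eqP => // ->; rewrite sv. Qed.

Lemma upd_false (s : cfg) v : s v -> upd s v false = flip s v.
Proof. by move=> sv; rewrite /flip sv. Qed.

Lemma marg_pair b (J : V -> V -> R) h v (s : cfg) :
  marginally_bounded b (gibbs J h) -> s v ->
  b * (gibbs J h s + gibbs J h (flip s v)) <= gibbs J h s /\
  b * (gibbs J h s + gibbs J h (flip s v)) <= gibbs J h (flip s v).
Proof.
move=> MB sv.
have := @marg_upd b (gibbs J h) s v true (gibbs_gt0 J h) MB.
have := @marg_upd b (gibbs J h) s v false (gibbs_gt0 J h) MB.
by rewrite upd_true // upd_false // => H1 H2.
Qed.


Lemma Lv_flip (J : V -> V -> R) h v u (s : cfg) :
  s u -> Lv J h v s = Lv J h v (flip s u) + 2 * J v u.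
Proof.
move=> su; rewrite /Lv (bigD1 u) //= [in RHS](bigD1 u) //= flip_at su /=.
rewrite (eq_bigr (fun w => J v w * sp (flip s u w))); last first.
  by move=> w wu; rewrite flip_off.
rewrite /spin; ring.
Qed.

Variables (alpha b : R) (Jn Jm : V -> V -> R) (hn hm : V -> R).
Hypotheses (a1 : 1 <= alpha) (b0 : 0 < b)
  (Jsn : forall u w, Jn u w = Jn w u) (Jsm : forall u w, Jm u w = Jm w u)
  (Jnvv : forall v, Jn v v = 0) (Jmvv : forall v, Jm v v = 0)
  (MBn : marginally_bounded b (gibbs Jn hn))
  (MBm : marginally_bounded b (gibbs Jm hm)).

Local Notation nu := (gibbs Jn hn).
Local Notation mu := (gibbs Jm hm).
Local Notation chi := (chi_div alpha nu mu).
Definition xv v s := Lv Jn hn v s - Lv Jm hm v s.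

Lemma VL v :
  \sum_(s : cfg | s v) (mu (flip s v) + mu s) * powR (b * `|xv v s|) alpha / 2 <= chi.
Proof.
rewrite /chi_div (pair_sum _ v); apply: ler_sum => s sv.
have [hn1 hn0] := marg_pair b Jn hn v s MBn sv.
have [hm1 hm0] := marg_pair b Jm hm v s MBm sv.
rewrite addrC in hn1 hn0 hm1 hm0.
apply: pair_real => //; try exact: gibbs_gt0.
- exact: gibbs_flip.
- exact: gibbs_flip.
- by rewrite addrC.
- by rewrite addrC.
Qed.


Lemma mass_pair v (K : R) :
  \sum_(s : cfg | s v) (mu (flip s v) + mu s) * K = K.
Proof.
rewrite -[RHS]mul1r -(gibbs_sum1 Jm hm) mulr_suml (pair_sum _ v).
by apply: eq_bigr => s _; ring.
Qed.

Lemma powR_mono (x y : R) : 0 <= x -> x <= y -> powR x alpha <= powR y alpha.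
Proof.
move=> x0 xy; apply: ge0_ler_powR; rewrite ?nnegrE //.
- by apply: le_trans a1.
- by apply: le_trans xy.
Qed.

Lemma H_case v c : 0 <= c -> (forall s, c <= `|xv v s|) ->
  powR (b * c) alpha / 2 <= chi.
Proof.
move=> c0 hc; apply: le_trans (VL v).
rewrite -[X in X <= _](mass_pair v); apply: ler_sum => s _.
rewrite -!mulrA; apply: ler_wpM2l.
  by rewrite addr_ge0 // ltW // gibbs_gt0.
apply: ler_wpM2r; first by rewrite invr_ge0.
apply: powR_mono; first by rewrite mulr_ge0 // ltW.
by rewrite ler_wpM2l // ltW.
Qed.


Lemma J_case v u : u != v ->
  powR (b * `|Jn v u - Jm v u|) alpha * b / 2 <= chi.
Proof.
move=> uv.
set c := `|Jn v u - Jm v u|; set Pc := powR (b * c) alpha.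
apply: le_trans (VL v).
rewrite big_mkcond /= (pair_sum _ u) /=.
have one : \sum_(s : cfg | s u)
    ((if s v then mu (flip s v) + mu s else 0) +
     (if (flip s u) v then mu (flip (flip s u) v) + mu (flip s u) else 0)) = 1.
  rewrite -(pair_sum (fun s : cfg => if s v then mu (flip s v) + mu s else 0) u).
  rewrite -big_mkcond /=.
  by rewrite -[RHS](mass_pair v 1); apply: eq_bigr => s _; rewrite mulr1.
rewrite -[X in X <= _]mul1r -{1}one mulr_suml; apply: ler_sum => s su.
have fv : flip s u v = s v by rewrite flip_off // eq_sym.
rewrite fv; case sv: (s v); last by rewrite !addr0 mul0r.
have [m1 m2] := marg_pair b Jm hm u s MBm su.
have su' : flip s v u by rewrite flip_off.
have [m3 m4] := marg_pair b Jm hm u (flip s v) MBm su'.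
rewrite -(flipC s u v) in m3 m4.
have dx : xv v s = xv v (flip s u) + 2 * (Jn v u - Jm v u).
  by rewrite /xv (Lv_flip Jn hn v u s su) (Lv_flip Jm hm v u s su); ring.
have g1 := gibbs_gt0 Jm hm s.
have g2 := gibbs_gt0 Jm hm (flip s v).
have g3 := gibbs_gt0 Jm hm (flip s u).
have g4 := gibbs_gt0 Jm hm (flip (flip s u) v).
set A1 := mu (flip s v) + mu s.
set A0 := mu (flip (flip s u) v) + mu (flip s u).
set P1 := powR (b * `|xv v s|) alpha.
set P0 := powR (b * `|xv v (flip s u)|) alpha.
have hb1 : b * (A1 + A0) <= A1 by rewrite /A1 /A0; lra.
have hb0 : b * (A1 + A0) <= A0 by rewrite /A1 /A0; lra.
have A1ge0 : 0 <= A1 by rewrite /A1; lra.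
have A0ge0 : 0 <= A0 by rewrite /A0; lra.
have P1ge0 : 0 <= P1 by apply: powR_ge0.
have P0ge0 : 0 <= P0 by apply: powR_ge0.
have Pcge0 : 0 <= Pc by apply: powR_ge0.
have t : 2 * c <= `|xv v s| + `|xv v (flip s u)|.
  have -> : 2 * c = `|xv v s - xv v (flip s u)|.
    by rewrite dx addrC addKr normrM ger0_norm.
  exact: ler_normB.
have bc0 : 0 <= b * c by rewrite mulr_ge0 ?(ltW b0) // /c normr_ge0.
have e1 : (A1 + A0) * (Pc * b / 2) = (b * (A1 + A0)) * Pc / 2 by ring.
rewrite e1.
case: (lerP c `|xv v s|) => hc.
- have PP : Pc <= P1 by apply: powR_mono => //; rewrite ler_pM2l.
  have k1 : b * (A1 + A0) * Pc <= A1 * P1.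
    apply: (le_trans (ler_wpM2r Pcge0 hb1)); exact: ler_wpM2l.
  have k2 : 0 <= A0 * P0 by apply: mulr_ge0.
  lra.
- have hc' : c <= `|xv v (flip s u)| by lra.
  have PP : Pc <= P0 by apply: powR_mono => //; rewrite ler_pM2l.
  have k1 : b * (A1 + A0) * Pc <= A0 * P0.
    apply: (le_trans (ler_wpM2r Pcge0 hb0)); exact: ler_wpM2l.
  have k2 : 0 <= A1 * P1 by apply: mulr_ge0.
  lra.
Qed.


Lemma chi_ge0 : 0 <= chi.
Proof.
apply: sumr_ge0 => s _; apply: mulr_ge0; first exact/ltW/gibbs_gt0.
by apply: mulr_ge0; [rewrite invr_ge0 | apply: powR_ge0].
Qed.

Lemma main_sec (E : rel V) :
  (forall u w, Jn u w != 0 -> E u w) -> (forall u w, Jm u w != 0 -> E u w) ->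
  b <= 1 ->
  powR b (2 * alpha) / 2 * powR (d_par E Jn hn Jm hm) alpha <= chi.
Proof.
move=> HEn HEm b1.
have a0 : 0 < alpha by apply: lt_le_trans a1.
set K := powR b (2 * alpha) / 2.
have b01 : 0 < b <= 1 by rewrite b0 b1.
have Kb1 : powR b (2 * alpha) <= powR b alpha.
  by apply: ger_powR => //; lra.
have Kb2 : powR b (2 * alpha) <= b * powR b alpha.
  have -> : b * powR b alpha = powR b (1 + alpha).
    by rewrite powRD ?powRr1 ?ltW // (gt_eqF b0) implybT.
  apply: ger_powR => //; have ha := a1; lra.
have pbge0 : 0 <= powR b alpha by apply: powR_ge0.
pose P x := K * powR x alpha <= chi.
have P0 : P 0 by rewrite /P powR0 ?gt_eqF // mulr0 chi_ge0.
have Pmax : forall x y, P x -> P y -> P (Num.max x y).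
  by move=> x y Px Py; case: leP.
have PJ : forall u v, P `|Jn u v - Jm u v|.
  move=> u v; case: (eqVneq u v) => [->|uv].
    by rewrite Jnvv Jmvv subrr normr0.
  have := J_case u v; rewrite eq_sym => /(_ uv).
  rewrite (powRM _ (ltW b0) (normr_ge0 _)) /P /K => H; apply: le_trans H.
  have := powR_ge0 `|Jn u v - Jm u v| alpha; nra.
have PH : forall v, P (`|hn v - hm v| / (deg E v).+1%:R).
  move=> v; set c := _ / _.
  have c0 : 0 <= c by rewrite /c divr_ge0.
  case: (boolP [exists u, c <= `|Jn v u - Jm v u|]).
    case/existsP => u cu; apply: le_trans (PJ v u).
    rewrite /K ler_wpM2l //; last exact: powR_mono.
    by rewrite divr_ge0 ?powR_ge0.
  rewrite negb_exists => /forallP hu.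
  have hu' : forall u, `|Jn v u - Jm v u| <= c.
    by move=> u; have := hu u; rewrite -ltNge => /ltW.
  have hx : forall s, c <= `|xv v s|.
    move=> s.
    have ex : xv v s = (hn v - hm v) + \sum_w (Jn v w - Jm v w) * spin R (s w).
      rewrite /xv /Lv.
      have -> : \sum_w (Jn v w - Jm v w) * spin R (s w) =
        \sum_w Jn v w * spin R (s w) - \sum_w Jm v w * spin R (s w).
        by rewrite -sumrB; apply: eq_bigr => w _; rewrite mulrBl.
      ring.
    set S := \sum_w _ in ex.
    have hS : `|S| <= c * (deg E v)%:R.
      apply: (le_trans (ler_norm_sum _ _ _)).
      have -> : \sum_w `|(Jn v w - Jm v w) * spin R (s w)| =
                \sum_w `|Jn v w - Jm v w|.
        by apply: eq_bigr => w _; rewrite normrM; case: (s w);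
          rewrite /spin ?normrN normr1 mulr1.
      rewrite (bigID (fun w => E v w)) /= [X in _ + X]big1 ?addr0; last first.
        move=> w /negbTE nE.
        have hn0 : Jn v w == 0 by apply: contraT => /HEn; rewrite nE.
        have hm0 : Jm v w == 0 by apply: contraT => /HEm; rewrite nE.
        by rewrite (eqP hn0) (eqP hm0) subrr normr0.
      apply: (le_trans (ler_sum _ (fun w _ => hu' w))).
      have -> : \sum_(w | E v w) c = \sum_(w in [set u | E v u]) c by apply: eq_bigl => w; rewrite inE.
      by rewrite sumr_const mulr_natr /deg.
    have hd : `|hn v - hm v| = c * (deg E v).+1%:R.
      by rewrite /c divfK // pnatr_eq0.
    have := ler_normB (xv v s) S; rewrite ex addrK hd -natr1 mulrDr mulr1.
    lra.
  have := H_case v c c0 hx; rewrite (powRM _ (ltW b0) c0) /P /K => H; apply: le_trans H.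
  have := powR_ge0 c alpha; nra.
rewrite /d_par; apply: (Pmax).
- apply: (big_ind P P0 Pmax) => u _; apply: (big_ind P P0 Pmax) => v _; exact: PJ.
- apply: (big_ind P P0 Pmax) => v _; exact: PH.
Qed.

End Comb.

Theorem lemma2p2 (R : realType) (V : finType) (E : rel V)
    (alpha b : R) (Jn : V -> V -> R) (hn : V -> R) (Jm : V -> V -> R) (hm : V -> R) :
  simple_graph E ->
  1 <= alpha -> 0 < b -> b <= 1 ->
  ising_model E Jn hn -> ising_model E Jm hm ->
  marginally_bounded b (gibbs Jn hn) ->
  marginally_bounded b (gibbs Jm hm) ->
  powR b (2 * alpha) / 2 * powR (d_par E Jn hn Jm hm) alpha
    <= chi_div alpha (gibbs Jn hn) (gibbs Jm hm).
Proof.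
move=> [_ Eirr] a1 b0 b1 [Jsn HEn] [Jsm HEm] MBn MBm.
have Jnvv : forall v, Jn v v = 0.
  move=> v; apply/eqP; apply: contraT => /HEn Evv.
  by move: (Eirr v); rewrite Evv.
have Jmvv : forall v, Jm v v = 0.
  move=> v; apply/eqP; apply: contraT => /HEm Evv.
  by move: (Eirr v); rewrite Evv.
exact: (@main_sec R V alpha b Jn Jm hn hm a1 b0 Jsn Jsm Jnvv Jmvv MBn MBm E HEn HEm b1).
Qed.
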